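(* Let $K=\mathbb{Q}(\sqrt{-d})$ with $d\in\{2,7,11,19,43,67,163\}$ (i.e. $K$ is an imaginary quadratic field of class number $1$ with $d\neq 1,3$). Let $L=\mathcal{O}_K=\mathbb{Z}+\mathbb{Z}\theta_d\subset\mathbb{C}\cong\mathbb{R}^2$ be the lattice of algebraic integers of $K$, where $\theta_d=\sqrt{-d}$ if $-d\equiv 2,3\pmod 4$ and $\theta_d=\frac{1+\sqrt{-d}}{2}$ if $-d\equiv 1\pmod 4$. Then for every $m>0$ such that the shell $L_m=\{x\in L: |x|^2=m\}$ is nonempty, $L_m$ is not a spherical $2$-design.
   Context: A finite nonempty set $X\subset S^{n-1}$ is a spherical $t$-design if $\frac{1}{|X|}\sum_{x\in X}f(x)=\frac{1}{|S^{n-1}|}\int_{S^{n-1}}f\,d\sigma$ for all polynomials $f$ of degree at most $t$; a finite nonempty subset $X$ of the sphere of radius $r$ is a spherical $t$-design if $\frac{1}{r}X$ is one. (For $n=2$, a finite set $\{\xi_1,\dots,\xi_N\}$ on the unit circle in $\mathbb{C}$ is a spherical $t$-design iff $\sum_i\xi_i^k=0$ for $k=1,\dots,t$.) *)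

(* Defs.v *)
From Stdlib Require Import Reals List ZArith.
From Coquelicot Require Import Coquelicot.
Open Scope R_scope.

(* Points of R^2 = C are pairs (real part, imaginary part). *)

Definition poly2_eval (t : nat) (c : nat -> nat -> R) (x y : R) : R :=
  sum_f_R0 (fun i => sum_f_R0 (fun j => c i j * x ^ i * y ^ j) (t - i)) t.

Definition sphere_avg (f : R * R -> R) : R :=
  RInt (fun th => f (cos th, sin th)) 0 (2 * PI) / (2 * PI).

Definition sum_list (l : list R) : R := fold_right Rplus 0 l.

Definition spherical_design (t : nat) (X : list (R * R)) : Prop :=
  X <> nil /\ NoDup X /\
  (forall p, In p X -> fst p ^ 2 + snd p ^ 2 = 1) /\
  forall c : nat -> nat -> R,
    sum_list (map (fun p => poly2_eval t c (fst p) (snd p)) X) / INR (length X)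
    = sphere_avg (fun p => poly2_eval t c (fst p) (snd p)).

Definition spherical_design_r (t : nat) (r : R) (X : list (R * R)) : Prop :=
  r > 0 /\ spherical_design t (map (fun p => (fst p / r, snd p / r)) X).

Definition theta (d : Z) : R * R :=
  if Z.eqb (Z.modulo (- d) 4) 1
  then (1 / 2, sqrt (IZR d) / 2)
  else (0, sqrt (IZR d)).

Definition lat_pt (d : Z) (ab : Z * Z) : R * R :=
  (IZR (fst ab) + IZR (snd ab) * fst (theta d), IZR (snd ab) * snd (theta d)).

Definition in_lattice (d : Z) (x : R * R) : Prop := exists ab : Z * Z, x = lat_pt d ab.

(* Main.v *)
Require Import Defs.
From Stdlib Require Import Reals List ZArith.
From Coquelicot Require Import Coquelicot.
From Stdlib Require Import Znumtheory Permutation Lia Lra Bool Classical.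
Open Scope R_scope.

Module ArithM.
Local Open Scope Z_scope.

Lemma NoDup_prod {A B} (l : list A) (l' : list B) :
  NoDup l -> NoDup l' -> NoDup (list_prod l l').
Proof.
  induction 1 as [|x l Hx Hl IH]; intros Hl'; simpl; [constructor|].
  apply NoDup_app; auto.
  - apply FinFun.Injective_map_NoDup; auto. intros a b H; now inversion H.
  - intros [a b] H1 H2. apply in_map_iff in H1 as [y [Hy _]]. inversion Hy; subst.
    apply in_prod_iff in H2 as [H2 _]. contradiction.
Qed.

Fixpoint fsum {A} (f : A -> Z) (l : list A) : Z := match l with nil => 0 | x :: t => f x + fsum f t end.

Lemma fsum_perm {A} (f : A -> Z) l l' : Permutation l l' -> fsum f l = fsum f l'.
Proof. induction 1; simpl; lia. Qed.

Lemma fsum_map {A B} (f : B -> Z) (g : A -> B) l : fsum f (map g l) = fsum (fun x => f (g x)) l.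
Proof. induction l; simpl; lia. Qed.

Lemma fsum_ext {A} (f g : A -> Z) l : (forall x, In x l -> f x = g x) -> fsum f l = fsum g l.
Proof. induction l; simpl; intros H; auto. rewrite H, IHl; auto. Qed.

Lemma fsum_filter_all {A} (f : A -> Z) P l : (forall x, In x l -> P x = true) -> fsum f (filter P l) = fsum f l.
Proof. induction l; simpl; intros H; auto. rewrite H; simpl; auto. rewrite IHl; auto. Qed.

Lemma fsum_filter_none {A} (f : A -> Z) P l : (forall x, In x l -> P x = false) -> fsum f (filter P l) = 0.
Proof. induction l; simpl; intros H; auto. rewrite H; simpl; auto. Qed.

Lemma fsum_incl_excl {A} (f : A -> Z) P1 P2 P3 l :
  (forall x, In x l -> P1 x || P2 x = true) -> (forall x, In x l -> P3 x = P1 x && P2 x) ->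
  fsum f l = fsum f (filter P1 l) + fsum f (filter P2 l) - fsum f (filter P3 l).
Proof.
  induction l; simpl; intros H1 H2; auto.
  rewrite IHl by auto. rewrite H2 by auto. specialize (H1 a (or_introl eq_refl)).
  destruct (P1 a), (P2 a); simpl in *; try discriminate; simpl; lia.
Qed.

Lemma fsum_mulc {A} (f : A -> Z) c l : fsum (fun x => c * f x) l = c * fsum f l.
Proof. induction l; simpl; [ring|rewrite IHl; ring]. Qed.

Lemma fsum_const1_nil {A} (l : list A) : fsum (fun _ => 1) l = Z.of_nat (length l).
Proof. induction l; [reflexivity|]; cbn [fsum length]; rewrite Nat2Z.inj_succ; lia. Qed.

Fixpoint cc (s t : Z) (j : nat) : Z * Z :=
  match j with O => (1, s) | Datatypes.S j => (snd (cc s t j), s * snd (cc s t j) - t * fst (cc s t j)) end.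

Lemma seq_closed s t (u : nat -> Z) : u 1%nat = s * u 0%nat ->
  (forall j, u (Datatypes.S (Datatypes.S j)) = s * u (Datatypes.S j) - t * u j) ->
  forall j, u j = fst (cc s t j) * u 0%nat.
Proof.
  intros H1 H2.
  assert (forall j, u j = fst (cc s t j) * u 0%nat /\ u (Datatypes.S j) = fst (cc s t (Datatypes.S j)) * u 0%nat).
  { induction j as [|j [IH1 IH2]]; cbn [cc fst snd].
    - split; [ring| rewrite H1; ring].
    - split; auto. rewrite H2, IH1, IH2. cbn [cc fst snd]. ring. }
  intros j; apply H.
Qed.

Lemma cc_mod s q j : (q | fst (cc s (q*q) j) - s ^ Z.of_nat j).
Proof.
  assert (H : forall j, (q | fst (cc s (q*q) j) - s ^ Z.of_nat j) /\ (q | fst (cc s (q*q) (Datatypes.S j)) - s ^ Z.of_nat (Datatypes.S j))).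
  { clear j; intros j; induction j as [|j [[a Ha] [b Hb]]].
    - split; [exists 0; reflexivity | exists 0; cbn [cc fst snd]; change (Z.of_nat 1) with 1; rewrite Z.pow_1_r; ring].
    - split; [exists b; exact Hb|].
      assert (E : fst (cc s (q*q) (Datatypes.S (Datatypes.S j))) = s * fst (cc s (q*q) (Datatypes.S j)) - q*q * fst (cc s (q*q) j)) by reflexivity.
      assert (P : s ^ Z.of_nat (Datatypes.S (Datatypes.S j)) = s * s ^ Z.of_nat (Datatypes.S j)) by (rewrite (Nat2Z.inj_succ (Datatypes.S j)), Z.pow_succ_r by lia; reflexivity).
      rewrite E, P. exists (s * b - q * fst (cc s (q*q) j)). rewrite Z.mul_sub_distr_r, <- (Z.mul_assoc s b q), <- Hb. ring. }
  apply H.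
Qed.

Lemma prime_pow_div q s j : prime q -> (q | s ^ Z.of_nat j) -> j <> O -> (q | s).
Proof.
  intros Hq. induction j as [|j IH]; intros H Hj; [congruence|].
  rewrite Nat2Z.inj_succ, Z.pow_succ_r in H by lia.
  destruct (prime_mult q Hq _ _ H); auto. destruct j; [simpl in H0; apply Z.divide_1_r in H0; pose proof (prime_ge_2 _ Hq); destruct H0 as [H0|H0]; rewrite ?H0 in *; lia|].
  apply IH; auto.
Qed.

Lemma cc_nonzero s q j : prime q -> ~ (q | s) -> fst (cc s (q*q) j) <> 0.
Proof.
  intros Hq Hs E. destruct j as [|j]; [simpl in E; lia|].
  destruct (cc_mod s q (Datatypes.S j)) as [a Ha]. rewrite E in Ha.
  apply Hs. apply (prime_pow_div q s (Datatypes.S j)); auto. exists (-a). lia.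
Qed.

Lemma prime_divisor m : 1 < m -> exists q, prime q /\ (q | m).
Proof.
  intros Hm. remember (Z.to_nat m) as n. revert m Hm Heqn.
  induction n as [n IH] using (well_founded_induction lt_wf). intros m Hm Hn.
  destruct (prime_dec m) as [P|P]; [exists m; split; auto; exists 1; ring|].
  destruct (not_prime_divide m Hm P) as [d [Hd Hdm]].
  destruct (IH (Z.to_nat d) ltac:(lia) d ltac:(lia) eq_refl) as [q [Hq Hqd]].
  exists q; split; auto. eapply Z.divide_trans; eauto.
Qed.

Lemma factor_out q m : 1 < q -> 0 < m -> exists j m', m = q ^ Z.of_nat j * m' /\ ~ (q | m') /\ 0 < m'.
Proof.
  intros Hq Hm. remember (Z.to_nat m) as n. revert m Hm Heqn.
  induction n as [n IH] using (well_founded_induction lt_wf). intros m Hm Hn.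
  destruct (Zdivide_dec q m) as [[m2 E]|N].
  - assert (0 < m2) by nia. destruct (IH (Z.to_nat m2) ltac:(nia) m2 H eq_refl) as [j [m' [E2 [N2 P2]]]].
    exists (Datatypes.S j), m'. rewrite Nat2Z.inj_succ, Z.pow_succ_r by lia. split; [|auto]. rewrite E, E2. ring.
  - exists O, m. split; [change (Z.of_nat 0) with 0; rewrite Z.pow_0_r; ring|auto].
Qed.

Section Arith.
Variables e1 k : Z.
Hypothesis He1 : e1 = 0 \/ e1 = 1.
Hypothesis Hk : 2 <= k.

Definition nrm (x : Z*Z) : Z := fst x * fst x + e1 * fst x * snd x + k * snd x * snd x.
Definition mul (x y : Z*Z) : Z*Z :=
  (fst x * fst y - k * snd x * snd y, fst x * snd y + snd x * fst y + e1 * snd x * snd y).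
Definition cnj (x : Z*Z) : Z*Z := (fst x + e1 * snd x, - snd x).
Definition tr (x : Z*Z) : Z := 2 * fst x + e1 * snd x.
Definition Rv (x : Z*Z) : Z := 2 * tr (mul x x).
Definition DD := 4 * k - e1 * e1.

Lemma nrm4 x : 4 * nrm x = tr x * tr x + DD * snd x * snd x.
Proof. destruct x; unfold nrm, tr, DD; cbn [fst snd]; ring. Qed.

Lemma nrm_nonneg x : 0 <= nrm x.
Proof. pose proof (nrm4 x). unfold DD in *. destruct He1; subst; nia. Qed.

Lemma mulC x y : mul x y = mul y x.
Proof. destruct x, y; unfold mul; cbn [fst snd]; f_equal; ring. Qed.
Lemma mulA x y z : mul x (mul y z) = mul (mul x y) z.
Proof. destruct x, y, z; unfold mul; cbn [fst snd]; f_equal; ring. Qed.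
Lemma nrm_mul x y : nrm (mul x y) = nrm x * nrm y.
Proof. destruct x, y; unfold nrm, mul; cbn [fst snd]; ring. Qed.
Lemma mul_cnj x : mul x (cnj x) = (nrm x, 0).
Proof. destruct x; unfold nrm, mul, cnj; cbn [fst snd]; f_equal; ring. Qed.
Lemma nrm_cnj x : nrm (cnj x) = nrm x.
Proof. destruct x; unfold nrm, cnj; cbn [fst snd]; ring. Qed.
Lemma mul_sc c x : mul (c, 0) x = (c * fst x, c * snd x).
Proof. destruct x; unfold mul; cbn [fst snd]; f_equal; ring. Qed.
Lemma nrm_sc c : nrm (c, 0) = c * c.
Proof. unfold nrm; cbn [fst snd]; ring. Qed.

Lemma Rv_split p x : Rv (mul p x) + Rv (mul (cnj p) x) = (tr p * tr p - 2 * nrm p) * Rv x.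
Proof. destruct p, x; unfold Rv, tr, mul, cnj, nrm; cbn [fst snd]; ring. Qed.
Lemma Rv_sc c x : Rv (mul (c, 0) x) = c * c * Rv x.
Proof. destruct x; unfold Rv, tr, mul; cbn [fst snd]; ring. Qed.

Lemma nrm_zero x : nrm x = 0 -> x = (0, 0).
Proof. intros H. pose proof (nrm4 x). destruct x as [a b]; unfold tr, DD in *; cbn [fst snd] in *.
  rewrite H in *. pose proof (Z.square_nonneg (2*a+e1*b)). pose proof (Z.square_nonneg b).
  assert (b = 0) by (destruct He1 as [-> | ->]; nia). subst b.
  assert (a = 0) by nia. subst; auto. Qed.

Definition rng (M : nat) : list Z := map (fun i => Z.of_nat i - Z.of_nat M) (seq 0 (2 * M + 1)).
Lemma in_rng M z : In z (rng M) <-> - Z.of_nat M <= z <= Z.of_nat M.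
Proof.
  unfold rng; rewrite in_map_iff; split.
  - intros [i [<- Hi]]. apply in_seq in Hi. lia.
  - intros H. exists (Z.to_nat (z + Z.of_nat M)). split; [lia|]. apply in_seq; lia.
Qed.
Lemma rng_nodup M : NoDup (rng M).
Proof. apply FinFun.Injective_map_NoDup; [intros a b; lia| apply seq_NoDup]. Qed.

Definition Sh (m : Z) : list (Z*Z) :=
  let M := Z.to_nat (4 * m) in filter (fun x => Z.eqb (nrm x) m) (list_prod (rng M) (rng M)).

Lemma S_nodup m : NoDup (Sh m).
Proof. apply NoDup_filter, NoDup_prod; apply rng_nodup. Qed.

Lemma in_S m x : In x (Sh m) <-> nrm x = m.
Proof.
  unfold Sh; rewrite filter_In, Z.eqb_eq; split; [tauto|]. intros H; split; auto.
  destruct x as [a b]. apply in_prod_iff. pose proof (nrm4 (a,b)) as H4.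
  unfold tr, DD, nrm in *; cbn [fst snd] in *.
  rewrite !in_rng. set (T := 2*a+e1*b) in *.
  pose proof (Z.square_nonneg T). pose proof (Z.square_nonneg b).
  assert (b*b <= m) by (destruct He1 as [E|E]; rewrite E in *; nia).
  assert (T*T <= 4*m) by (destruct He1 as [E|E]; rewrite E in *; nia).
  assert (b <= b*b /\ -b <= b*b) by nia. assert (T <= T*T /\ -T <= T*T) by nia.
  assert (2*a = T - e1*b) by (unfold T; ring).
  assert (0 <= m) by nia.
  rewrite Z2Nat.id by lia.
  destruct He1 as [E|E]; rewrite E in *; split; nia.
Qed.

Definition divb (p g : Z*Z) : bool :=
  let y := mul g (cnj p) in (fst y mod nrm p =? 0) && (snd y mod nrm p =? 0).

Lemma pair_sc_inj n x y : n <> 0 -> (n * fst x, n * snd x) = (n * fst y, n * snd y) -> x = y.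
Proof. intros Hn H; inversion H. destruct x, y; cbn [fst snd] in *; f_equal; nia. Qed.

Lemma mul_inj p x y : nrm p <> 0 -> mul p x = mul p y -> x = y.
Proof.
  intros Hn H. apply (pair_sc_inj (nrm p)); auto.
  rewrite <- !mul_sc, <- (mul_cnj p), (mulC p (cnj p)), <- !mulA, H. reflexivity.
Qed.

Lemma divb_spec p g : nrm p <> 0 -> (divb p g = true <-> exists a, g = mul p a).
Proof.
  intros Hn. unfold divb. rewrite andb_true_iff, !Z.eqb_eq, !Z.mod_divide by auto. split.
  - intros [[q1 H1] [q2 H2]]. exists (q1, q2).
    apply (pair_sc_inj (nrm p)); auto.
    rewrite <- !mul_sc.
    assert (E : mul g (cnj p) = mul (nrm p, 0) (q1, q2)).
    { rewrite mul_sc. destruct (mul g (cnj p)); cbn [fst snd] in *; f_equal; lia. }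
    rewrite (mulA (nrm p, 0) p), (mulC (nrm p, 0) p), <- (mulA p (nrm p, 0)), <- E, (mulA p g), (mulC p g), <- (mulA g p), mul_cnj, (mulC g). reflexivity.
  - intros [a ->]. rewrite (mulC p a), <- mulA, mul_cnj, mulC, mul_sc; cbn [fst snd].
    split; [exists (fst a) | exists (snd a)]; ring.
Qed.

Lemma perm_div p m : 0 < nrm p ->
  Permutation (map (mul p) (Sh m)) (filter (divb p) (Sh (nrm p * m))).
Proof.
  intros Hp. apply NoDup_Permutation.
  - apply FinFun.Injective_map_NoDup; [intros x y; apply mul_inj; lia | apply S_nodup].
  - apply NoDup_filter, S_nodup.
  - intros g. rewrite in_map_iff, filter_In, in_S, divb_spec by (auto; lia). split.
    + intros [a [<- Ha]]. rewrite in_S in Ha by auto. rewrite nrm_mul, Ha. eauto.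
    + intros [Hg [a ->]]. exists a; split; auto. rewrite in_S by auto.
      rewrite nrm_mul in Hg. nia.
Qed.

Lemma fsum_div f p m : 0 < nrm p ->
  fsum f (filter (divb p) (Sh (nrm p * m))) = fsum (fun a => f (mul p a)) (Sh m).
Proof. intros Hp. rewrite <- (fsum_perm _ _ _ (perm_div p m Hp)), fsum_map. reflexivity. Qed.


Lemma cnj_cnj x : cnj (cnj x) = x.
Proof. destruct x; unfold cnj; cbn [fst snd]; f_equal; ring. Qed.

Lemma divb_coord p g : 0 < nrm p -> divb p g = true <->
  ((nrm p | fst (mul g (cnj p))) /\ (nrm p | snd (mul g (cnj p)))).
Proof. intros Hp. unfold divb. rewrite andb_true_iff, !Z.eqb_eq, !Z.mod_divide by lia. tauto. Qed.

Lemma cover p g : prime (nrm p) -> (nrm p | nrm g) -> divb p g || divb (cnj p) g = true.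
Proof.
  intros Hpr Hd. pose proof (prime_ge_2 _ Hpr) as H2.
  apply orb_true_iff. rewrite !divb_coord, nrm_cnj, cnj_cnj by (rewrite ?nrm_cnj; lia).
  set (q := nrm p) in *.
  assert (HY : snd (mul g (cnj p)) * snd (mul g p) = snd g * snd g * q - snd p * snd p * nrm g).
  { unfold q; destruct g, p; unfold mul, cnj, nrm; cbn [fst snd]; ring. }
  destruct Hd as [n Hn].
  assert (Hdy : (q | snd (mul g (cnj p)) * snd (mul g p))).
  { rewrite HY, Hn. exists (snd g * snd g - snd p * snd p * n). ring. }
  assert (key : forall h, nrm h = q -> (q | snd (mul g (cnj h))) -> (q | fst (mul g (cnj h)))).
  { intros h Hh [y Hy]. set (X := fst (mul g (cnj h))).
    enough (HXX : (q | X * X)) by (destruct (prime_mult q Hpr _ _ HXX); auto).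
    assert (E : nrm (mul g (cnj h)) = X * X + e1 * X * snd (mul g (cnj h)) + k * snd (mul g (cnj h)) * snd (mul g (cnj h))).
    { unfold X, nrm; reflexivity. }
    rewrite nrm_mul, nrm_cnj, Hh, Hn, Hy in E. exists (n * q - e1 * X * y - k * y * y * q). nia. }
  destruct (prime_mult q Hpr _ _ Hdy) as [H|H].
  - left. split; auto.
  - right. rewrite <- (cnj_cnj p) in H |- *. split; auto. apply key; auto. rewrite nrm_cnj; auto.
Qed.

Lemma overlap p g : prime (nrm p) -> ~ (nrm p | tr p) ->
  divb (nrm p, 0) g = divb p g && divb (cnj p) g.
Proof.
  intros Hpr Htr. pose proof (prime_ge_2 _ Hpr) as H2. set (q := nrm p) in *.
  assert (Hq : 0 < nrm (q, 0)) by (rewrite nrm_sc; nia).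
  apply eq_iff_eq_true. rewrite andb_true_iff, !divb_spec by (rewrite ?nrm_cnj, ?nrm_sc; lia). split.
  - intros [a ->]. rewrite mul_sc. split.
    + exists (mul (cnj p) a). rewrite mulA, mul_cnj, mul_sc. reflexivity.
    + exists (mul p a). rewrite mulA, (mulC (cnj p) p), mul_cnj, mul_sc. reflexivity.
  - intros [[a Ha] [b Hb]].
    assert (E1 : mul g (cnj p) = (q * fst a, q * snd a)) by (rewrite Ha, (mulC p a), <- mulA, mul_cnj, mulC, mul_sc; reflexivity).
    assert (E2 : mul g p = (q * fst b, q * snd b)) by (rewrite Hb, (mulC (cnj p) b), <- mulA, (mulC (cnj p) p), mul_cnj, mulC, mul_sc; reflexivity).
    assert (E3 : forall i, i = fst \/ i = snd -> tr p * i g = q * (i a + i b)).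
    { intros i Hi. assert (Hs : tr p * i g = i (mul g (cnj p)) + i (mul g p)).
      { destruct Hi as [-> | ->]; destruct g, p; unfold tr, mul, cnj; cbn [fst snd]; ring. }
      rewrite Hs, E1, E2. destruct Hi as [-> | ->]; cbn [fst snd]; ring. }
    assert (D1 : (q | fst g)). { destruct (prime_mult q Hpr (tr p) (fst g)) as [H|H]; auto.
      exists (fst a + fst b). rewrite E3 by auto. ring. contradiction. }
    assert (D2 : (q | snd g)). { destruct (prime_mult q Hpr (tr p) (snd g)) as [H|H]; auto.
      exists (snd a + snd b). rewrite E3 by auto. ring. contradiction. }
    destruct D1 as [x Hx], D2 as [y Hy]. exists (x, y). rewrite mul_sc. destruct g; cbn [fst snd] in *.
    f_equal; lia.
Qed.


Lemma fsum_add {A} (f g : A -> Z) l : fsum (fun x => f x + g x) l = fsum f l + fsum g l.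
Proof. induction l; cbn [fsum]; lia. Qed.

Lemma split_rec f p m : prime (nrm p) -> ~ (nrm p | tr p) ->
  fsum f (Sh (nrm p * m)) = fsum (fun a => f (mul p a) + f (mul (cnj p) a)) (Sh m)
    - fsum f (filter (divb (nrm p, 0)) (Sh (nrm p * m))).
Proof.
  intros Hpr Htr. pose proof (prime_ge_2 _ Hpr).
  rewrite (fsum_incl_excl f (divb p) (divb (cnj p)) (divb (nrm p, 0))).
  - rewrite fsum_add, fsum_div by lia. f_equal. f_equal.
    rewrite <- (nrm_cnj p) at 1. rewrite fsum_div by (rewrite nrm_cnj; lia). reflexivity.
  - intros x Hx. apply cover; auto. apply in_S in Hx. rewrite Hx. exists m; ring.
  - intros x _. apply overlap; auto.
Qed.

Lemma third_div f q m2 : 0 < q ->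
  fsum f (filter (divb (q, 0)) (Sh (q * (q * m2)))) = fsum (fun a => f (mul (q, 0) a)) (Sh m2).
Proof. intros Hq. rewrite Z.mul_assoc, <- nrm_sc. apply fsum_div. rewrite nrm_sc; nia. Qed.

Lemma third_none f q m : 0 < q -> ~ (q | m) ->
  fsum f (filter (divb (q, 0)) (Sh (q * m))) = 0.
Proof.
  intros Hq Hm. apply fsum_filter_none. intros x Hx. apply in_S in Hx.
  destruct (divb (q, 0) x) eqn:E; auto. exfalso.
  apply divb_spec in E; [|rewrite nrm_sc; nia]. destruct E as [a ->].
  rewrite nrm_mul, nrm_sc in Hx. apply Hm. exists (nrm a). nia.
Qed.

Definition Fm m := fsum Rv (Sh m).
Definition Cm m := fsum (fun _ => 1) (Sh m).

Lemma Cm_pos m : Sh m <> nil -> Cm m <> 0.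
Proof. unfold Cm. rewrite fsum_const1_nil. destruct (Sh m); [congruence|]. cbn [length]. lia. Qed.
Lemma Cm_nil m : Cm m <> 0 -> Sh m <> nil.
Proof. unfold Cm. intros H E. rewrite E in H. apply H; reflexivity. Qed.

Lemma F_split p m : prime (nrm p) -> ~ (nrm p | tr p) ->
  Fm (nrm p * m) = (tr p * tr p - 2 * nrm p) * Fm m
    - fsum Rv (filter (divb (nrm p, 0)) (Sh (nrm p * m))).
Proof.
  intros Hpr Htr. unfold Fm. rewrite split_rec by auto. f_equal.
  rewrite <- fsum_mulc. apply fsum_ext. intros; apply Rv_split.
Qed.

Lemma C_split p m : prime (nrm p) -> ~ (nrm p | tr p) ->
  Cm (nrm p * m) = 2 * Cm m - fsum (fun _ => 1) (filter (divb (nrm p, 0)) (Sh (nrm p * m))).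
Proof.
  intros Hpr Htr. unfold Cm. rewrite split_rec by auto. f_equal.
  rewrite <- fsum_mulc. apply fsum_ext. intros; ring.
Qed.

Lemma F_third_div q m2 : 0 < q -> fsum Rv (filter (divb (q, 0)) (Sh (q * (q * m2)))) = q * q * Fm m2.
Proof. intros. rewrite third_div by auto. unfold Fm. rewrite <- fsum_mulc. apply fsum_ext; intros; apply Rv_sc. Qed.
Lemma C_third_div q m2 : 0 < q -> fsum (fun _ => 1) (filter (divb (q, 0)) (Sh (q * (q * m2)))) = Cm m2.
Proof. intros. rewrite third_div by auto. reflexivity. Qed.

Lemma ram_rec f r m : 0 < nrm r -> (forall g, (nrm r | nrm g) -> divb r g = true) ->
  fsum f (Sh (nrm r * m)) = fsum (fun a => f (mul r a)) (Sh m).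
Proof.
  intros Hr Hd. rewrite <- fsum_div by auto. symmetry. apply fsum_filter_all.
  intros x Hx. apply Hd. apply in_S in Hx. rewrite Hx. exists m; ring.
Qed.

Lemma inert_rec f q m : 0 < q -> (forall g, (q | nrm g) -> divb (q, 0) g = true) -> (q | m) -> Sh m <> nil ->
  exists m2, m = q * (q * m2) /\ fsum f (Sh m) = fsum (fun a => f (mul (q, 0) a)) (Sh m2).
Proof.
  intros Hq Hd Hm Hne. destruct (Sh m) as [|g l] eqn:E; [congruence|].
  assert (Hg : nrm g = m) by (apply in_S; rewrite E; left; auto).
  pose proof (Hd g) as Hg2. rewrite Hg in Hg2. specialize (Hg2 Hm).
  apply divb_spec in Hg2; [|rewrite nrm_sc; nia]. destruct Hg2 as [a Ha].
  exists (nrm a). assert (Em : m = q * (q * nrm a)) by (rewrite <- Hg, Ha, nrm_mul, nrm_sc; ring).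
  split; auto. rewrite <- E, Em, Z.mul_assoc, <- nrm_sc. apply ram_rec.
  - rewrite nrm_sc; nia.
  - intros h Hh. apply Hd. rewrite nrm_sc in Hh. eapply Z.divide_trans; [|exact Hh]. exists q; ring.
Qed.


Variables (l : Z) (r : Z * Z).
Hypothesis Hl : prime l.
Hypothesis Hr : nrm r = l.
Hypothesis Hram : forall g, (l | nrm g) -> divb r g = true.
Hypothesis HRr : forall a, Rv (mul r a) = - l * Rv a.
Hypothesis Htr : forall p, prime (nrm p) -> nrm p <> l -> ~ (nrm p | tr p).
Hypothesis Hcn : forall q g, prime q -> q <> l -> (q | nrm g) -> ~ ((q | fst g) /\ (q | snd g)) ->
  exists p, nrm p = q.
Hypothesis Hbase : Fm 1 <> 0.

Lemma qpowS q j : q ^ Z.of_nat (Datatypes.S j) = q * q ^ Z.of_nat j.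
Proof. rewrite Nat2Z.inj_succ, Z.pow_succ_r by lia. reflexivity. Qed.

Lemma split_closed p m' : prime (nrm p) -> nrm p <> l -> ~ (nrm p | m') -> forall j,
  Fm (nrm p ^ Z.of_nat j * m') = fst (cc (tr p * tr p - 2 * nrm p) (nrm p * nrm p) j) * Fm m' /\
  Cm (nrm p ^ Z.of_nat j * m') = fst (cc 2 1 j) * Cm m'.
Proof.
  intros Hpr Hl' Hm j. pose proof (prime_ge_2 _ Hpr). pose proof (Htr p Hpr Hl') as Ht.
  split.
  - rewrite (seq_closed (tr p * tr p - 2 * nrm p) (nrm p * nrm p) (fun j => Fm (nrm p ^ Z.of_nat j * m'))); [change (Z.of_nat 0) with 0; rewrite Z.pow_0_r, Z.mul_1_l; reflexivity| |].
    + rewrite qpowS. change (Z.of_nat 0) with 0. rewrite Z.pow_0_r, Z.mul_1_r, Z.mul_1_l.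
      rewrite F_split by auto. rewrite third_none; [ring|lia|auto].
    + intros i. rewrite !qpowS, <- !Z.mul_assoc. rewrite F_split by auto. rewrite F_third_div by lia. ring.
  - rewrite (seq_closed 2 1 (fun j => Cm (nrm p ^ Z.of_nat j * m'))); [change (Z.of_nat 0) with 0; rewrite Z.pow_0_r, Z.mul_1_l; reflexivity| |].
    + rewrite qpowS. change (Z.of_nat 0) with 0. rewrite Z.pow_0_r, Z.mul_1_r, Z.mul_1_l.
      rewrite C_split by auto. rewrite third_none; [ring|lia|auto].
    + intros i. rewrite !qpowS, <- !Z.mul_assoc. rewrite C_split by auto. rewrite C_third_div by lia. ring.
Qed.

Lemma main_arith : forall m, 1 <= m -> Sh m <> nil -> Fm m <> 0.
Proof.
  intros m. remember (Z.to_nat m) as n. revert m Heqn.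
  induction n as [n IH] using (well_founded_induction lt_wf). intros m Hn Hm Hne.
  pose proof (prime_ge_2 _ Hl).
  destruct (Z.eq_dec m 1) as [->|Hm1]; [exact Hbase|].
  destruct (prime_divisor m ltac:(lia)) as [q [Hq [m2 Hqm]]].
  pose proof (prime_ge_2 _ Hq).
  destruct (Z.eq_dec q l) as [->|Hql].
  -
    assert (Hram' : forall g, (nrm r | nrm g) -> divb r g = true) by (rewrite Hr; auto).
    assert (Hr0 : 0 < nrm r) by lia.
    assert (Em : m = nrm r * m2) by (rewrite Hr, Hqm; ring).
    assert (0 < m2) by nia.
    assert (HC : Cm m = Cm m2) by (unfold Cm; rewrite Em; apply ram_rec; auto).
    assert (HF : Fm m = - l * Fm m2).
    { unfold Fm. rewrite Em, ram_rec by auto. rewrite <- fsum_mulc. apply fsum_ext; intros; apply HRr. }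
    rewrite HF. apply Z.neq_mul_0. split; [lia|].
    apply (IH (Z.to_nat m2)); [subst n; rewrite Em; nia|reflexivity|nia|]. apply Cm_nil. rewrite <- HC. apply Cm_pos; auto.
  - destruct (classic (exists p, nrm p = q)) as [[p Hp]|Hnp].
    +
      subst q. destruct (factor_out (nrm p) m ltac:(lia) ltac:(lia)) as [j [m' [Em [Hm' Hpos]]]].
      destruct j as [|j].
      { exfalso. apply Hm'. change (Z.of_nat 0) with 0 in Em. rewrite Z.pow_0_r, Z.mul_1_l in Em.
        rewrite <- Em. exists m2; auto. }
      destruct (split_closed p m' Hq Hql Hm' (Datatypes.S j)) as [HF HC].
      rewrite <- Em in HF, HC. rewrite HF. apply Z.neq_mul_0. split.
      * apply cc_nonzero; auto. intros Hd. apply (Htr p Hq Hql).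
        assert (Hd2 : (nrm p | tr p * tr p)).
        { destruct Hd as [z Hz]. exists (z + 2). lia. }
        destruct (prime_mult _ Hq _ _ Hd2); auto.
      * assert (Hlt : m' < m).
        { rewrite Em, qpowS. assert (0 < nrm p ^ Z.of_nat j) by (apply Z.pow_pos_nonneg; lia). assert (2 <= nrm p * nrm p ^ Z.of_nat j) by nia. nia. }
        apply (IH (Z.to_nat m')); [lia|reflexivity|lia|].
        apply Cm_nil. intros HC0. apply (Cm_pos m Hne). rewrite HC, HC0. ring.
    +
      assert (Hin : forall g, (q | nrm g) -> divb (q, 0) g = true).
      { intros g Hg. apply divb_spec; [rewrite nrm_sc; nia|].
        destruct (classic ((q | fst g) /\ (q | snd g))) as [[[x Hx] [y Hy]]|N].
        - exists (x, y). rewrite mul_sc. destruct g; cbn [fst snd] in *. f_equal; lia.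
        - exfalso. apply Hnp. apply (Hcn q g); auto. }
      destruct (inert_rec Rv q m ltac:(lia) Hin ltac:(exists m2; auto) Hne) as [m3 [Em HF]].
      destruct (inert_rec (fun _ => 1) q m ltac:(lia) Hin ltac:(exists m2; auto) Hne) as [m4 [Em4 HC]].
      assert (m4 = m3) by nia. subst m4.
      assert (0 < m3) by nia.
      unfold Fm. rewrite HF. assert (HF2 : fsum (fun a => Rv (mul (q, 0) a)) (Sh m3) = q * q * Fm m3).
      { unfold Fm. rewrite <- fsum_mulc. apply fsum_ext; intros; apply Rv_sc. }
      rewrite HF2. apply Z.neq_mul_0. split; [nia|].
      apply (IH (Z.to_nat m3)); [subst n; rewrite Em; assert (4 <= q*q) by nia; nia|reflexivity|nia|]. apply Cm_nil. intros HC0.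
      apply (Cm_pos m Hne). unfold Cm. rewrite HC. exact HC0.
Qed.


Lemma reduce (Hred : forall A B C, 1 <= A -> 3 * A * A <= DD -> -A <= B < A -> B * B + DD = 4 * A * C -> A = 1) :
  forall n A B C p, Z.to_nat A = n -> 0 < A -> B * B - 4 * A * C = - DD ->
  (exists x y, A * x * x + B * x * y + C * y * y = p) -> exists q, nrm q = p.
Proof.
  intros n. induction n as [n IH] using (well_founded_induction lt_wf).
  intros A B C p Hn HA Hdisc [x [y Hxy]].
  pose proof (Z.div_mod (B + A) (2 * A) ltac:(lia)) as Hdm.
  pose proof (Z.mod_pos_bound (B + A) (2 * A) ltac:(lia)) as Hmb.
  set (q0 := (B + A) / (2 * A)) in *. set (rm := (B + A) mod (2 * A)) in *.
  set (B' := B - 2 * A * q0). set (C' := A * q0 * q0 - B * q0 + C).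
  assert (HB' : -A <= B' < A) by (unfold B'; lia).
  assert (Hd' : B' * B' - 4 * A * C' = - DD) by (unfold B', C'; rewrite <- Hdisc; ring).
  assert (Hr' : A * (x + q0 * y) * (x + q0 * y) + B' * (x + q0 * y) * y + C' * y * y = p)
    by (rewrite <- Hxy; unfold B', C'; ring).
  assert (HDpos : 7 <= DD) by (unfold DD; destruct He1 as [E|E]; rewrite E; lia).
  destruct (Z_le_gt_dec A C') as [Hle|Hgt].
  - assert (3 * A * A <= DD) by nia.
    assert (A = 1) by (apply (Hred A B' C'); auto; lia). subst A.
    assert (B' = - e1 /\ C' = k) by (unfold DD in *; destruct He1 as [E|E]; rewrite E in *; nia).
    exists (x + q0 * y, - y). unfold nrm; cbn [fst snd]. rewrite <- Hr'. destruct H0 as [-> ->]. ring.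
  - assert (0 < C') by nia.
    apply (IH (Z.to_nat C') ltac:(lia) C' (- B') A p eq_refl); auto.
    + rewrite <- Hd'. ring.
    + exists y, (- (x + q0 * y)). rewrite <- Hr'. ring.
Qed.

Lemma init_form p g : prime p -> p <> 2 -> (p | nrm g) -> ~ ((p | fst g) /\ (p | snd g)) ->
  exists B C, B * B - 4 * p * C = - DD.
Proof.
  intros Hp H2 [n Hn] Hnd. pose proof (prime_ge_2 _ Hp).
  destruct g as [a b]. cbn [fst snd] in *.
  pose proof (nrm4 (a, b)) as H4. unfold tr in H4; cbn [fst snd] in H4.
  set (T := 2 * a + e1 * b) in *.
  assert (Hp2 : ~ (p | 2)) by (intros Hd; apply Z.divide_pos_le in Hd; lia).
  assert (Hb : ~ (p | b)).
  { intros [c Hc]. apply Hnd. split; [|exists c; auto].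
    assert (HT : (p | T * T)) by (exists (4 * n - DD * c * c * p); rewrite Hn, Hc in H4; nia).
    destruct (prime_mult p Hp T T HT) as [HT2|HT2];
    assert (H2a : (p | 2 * a)) by (destruct HT2 as [t Ht]; exists (t - e1 * c); unfold T in Ht; nia);
    destruct (prime_mult p Hp 2 a H2a); tauto. }
  destruct (rel_prime_bezout _ _ (prime_rel_prime p Hp b Hb)) as [u v Huv].
  set (rr := T * v).
  assert (Hrr : rr * rr + DD = p * (4 * n * v * v + DD * u * (1 + b * v))).
  { unfold rr. assert (T * T = 4 * n * p - DD * b * b) by (rewrite Hn in H4; lia).
    assert (E : b * v = 1 - u * p) by lia. replace (T * v * (T * v)) with ((T * T) * (v * v)) by ring. rewrite H0.
    replace ((4 * n * p - DD * b * b) * (v * v)) with (4 * n * p * v * v - DD * (b * v) * (b * v)) by ring. rewrite E. ring. }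
  assert (Hpo : Z.even p = false).
  { destruct (Z.even p) eqn:E; auto. apply Z.even_spec in E as [w Hw].
    destruct (prime_divisors p Hp 2 ltac:(exists w; lia)) as [X|[X|[X|X]]]; lia. }
  assert (HB : exists B w, (p | B * B + DD) /\ B = e1 + 2 * w).
  { destruct (Z.even (rr - e1)) eqn:E.
    - apply Z.even_spec in E as [w Hw]. exists rr, w. split; [|lia].
      rewrite Hrr. exists (4 * n * v * v + DD * u * (1 + b * v)). ring.
    - assert (Z.even (rr + p - e1) = true).
      { replace (rr + p - e1) with ((rr - e1) + p) by ring. rewrite Z.even_add, E, Hpo. reflexivity. }
      apply Z.even_spec in H0 as [w Hw]. exists (rr + p), w. split; [|lia].
      exists (4 * n * v * v + DD * u * (1 + b * v) + 2 * rr + p).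
      replace ((rr + p) * (rr + p) + DD) with (rr * rr + DD + p * (2 * rr + p)) by ring. rewrite Hrr. ring. }
  destruct HB as [B [w [[X HX] HBw]]].
  assert (H4X : (4 | X * p)).
  { rewrite <- HX. exists (e1 * w + w * w + k). unfold DD. rewrite HBw.
    destruct He1 as [E|E]; rewrite E; ring. }
  assert (Hrp : rel_prime 4 p).
  { apply rel_prime_sym. apply prime_rel_prime; auto. intros [c Hc].
    destruct (prime_mult p Hp 2 2) as [Y|Y]; [exists c; lia|tauto|tauto]. }
  destruct (Gauss 4 p X ltac:(rewrite Z.mul_comm; exact H4X) Hrp) as [C HC].
  exists B, C. rewrite HC in HX. lia.
Qed.


Lemma cn_odd (Hred : forall A B C, 1 <= A -> 3 * A * A <= DD -> -A <= B < A -> B * B + DD = 4 * A * C -> A = 1)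
  q g : prime q -> q <> 2 -> (q | nrm g) -> ~ ((q | fst g) /\ (q | snd g)) -> exists p, nrm p = q.
Proof.
  intros Hq H2 Hd Hn. destruct (init_form q g Hq H2 Hd Hn) as [B [C HBC]].
  pose proof (prime_ge_2 _ Hq).
  apply (reduce Hred (Z.to_nat q) q B C q eq_refl ltac:(lia) HBC). exists 1, 0. ring.
Qed.

Lemma tr_gen (HD0 : forall p u, prime p -> p <> l -> DD * u * u = 4 * p -> False) p :
  prime (nrm p) -> nrm p <> l -> ~ (nrm p | tr p).
Proof.
  intros Hp Hpl [j Hj]. pose proof (prime_ge_2 _ Hp). pose proof (nrm4 p) as H4.
  set (q := nrm p) in *. rewrite Hj in H4.
  assert (HDpos : 7 <= DD) by (unfold DD; destruct He1 as [E|E]; rewrite E; lia).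
  pose proof (Z.square_nonneg (snd p)). pose proof (Z.square_nonneg j).
  destruct (Z.eq_dec j 0) as [->|Hj0].
  - apply (HD0 q (snd p) Hp Hpl). lia.
  - assert (1 <= j * j) by nia.
    assert (q * (4 - q * (j * j)) >= 0) by nia. assert (q * (j * j) <= 4) by nia.
    assert (-1 <= j <= 1) by nia. assert (j * j = 1) by (assert (j = 1 \/ j = -1) as [-> | ->] by lia; lia).
    assert (DD * snd p * snd p = 4 * q - q * q) by nia.
    assert (q <= 4) by nia.
    assert (DD * (snd p * snd p) <= 4) by nia.
    assert (snd p * snd p = 0) by (destruct (Z.eq_dec (snd p * snd p) 0) as [E|E]; auto; assert (1 <= snd p * snd p) by lia; nia).
    assert (Hq4 : q = 4) by nia. rewrite Hq4 in Hp.
    destruct (prime_divisors 4 Hp 2 ltac:(exists 2; lia)) as [X|[X|[X|X]]]; lia.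
Qed.

End Arith.

End ArithM.
Import ArithM.

Module R1M.

Definition c0 (i j : nat) : R :=
  match i, j with 2%nat, 0%nat => 1 | 0%nat, 2%nat => -1 | _, _ => 0 end.

Lemma poly_c0 x y : poly2_eval 2 c0 x y = x ^ 2 - y ^ 2.
Proof. unfold poly2_eval, c0; simpl. ring. Qed.

Lemma avg_c0 : sphere_avg (fun p => poly2_eval 2 c0 (fst p) (snd p)) = 0.
Proof.
  unfold sphere_avg. cbn [fst snd].
  rewrite (RInt_ext _ (fun th => cos th ^ 2 - sin th ^ 2)) by (intros; apply poly_c0).
  assert (H : is_RInt (fun th => cos th ^ 2 - sin th ^ 2) 0 (2 * PI) (sin (2*PI) * cos (2*PI) - sin 0 * cos 0)).
  { apply (is_RInt_derive (fun th => sin th * cos th)).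
    - intros x _. auto_derive; auto. ring.
    - intros x _. apply continuity_pt_filterlim. apply derivable_continuous_pt. reg. }
  rewrite (is_RInt_unique _ _ _ _ H). rewrite sin_2PI, sin_0. unfold Rdiv. ring.
Qed.

End R1M.
Import R1M.

Module FM.

Lemma sum_list_perm l l' : Permutation l l' -> sum_list l = sum_list l'.
Proof. induction 1; simpl; lra. Qed.

Lemma sum_list_IZR {A} (f : A -> Z) l : sum_list (map (fun x => IZR (f x)) l) = IZR (fsum f l).
Proof. induction l; simpl; auto. rewrite IHl, plus_IZR. reflexivity. Qed.

Lemma sum_list_scal {A} (g : A -> R) c l : sum_list (map (fun x => c * g x) l) = c * sum_list (map g l).
Proof. induction l; simpl; [ring|]. rewrite IHl. ring. Qed.

Lemma sum_list_ext {A} (g h : A -> R) l : (forall x, g x = h x) -> sum_list (map g l) = sum_list (map h l).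
Proof. intros H; induction l; simpl; auto. rewrite IHl, H. reflexivity. Qed.

Section RealPart.
Variables (e1 k : Z) (d : Z) (thx thy : R).
Hypothesis He1 : (e1 = 0 \/ e1 = 1)%Z.
Hypothesis Hk : (2 <= k)%Z.
Hypothesis Harith : forall m, (1 <= m)%Z -> Sh e1 k m <> nil -> Fm e1 k m <> 0%Z.
Hypothesis Hth : theta d = (thx, thy).
Hypothesis Hthx : thx = IZR e1 / 2.
Hypothesis Hthy : thy * thy = IZR (DD e1 k) / 4.
Hypothesis Hthy0 : 0 < thy.

Definition latp (ab : Z * Z) : R * R := (IZR (fst ab) + IZR (snd ab) * thx, IZR (snd ab) * thy).

Lemma Hlat ab : lat_pt d ab = latp ab.
Proof. unfold lat_pt, latp. rewrite Hth. reflexivity. Qed.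

Lemma norm_lat ab : fst (latp ab) ^ 2 + snd (latp ab) ^ 2 = IZR (nrm e1 k ab).
Proof.
  destruct ab as [a b]. unfold latp, nrm; cbn [fst snd].
  replace ((IZR b * thy) ^ 2) with (IZR b * IZR b * (thy * thy)) by ring. rewrite Hthy, Hthx.
  unfold DD. repeat rewrite ?minus_IZR, ?plus_IZR, ?mult_IZR. field.
Qed.

Lemma diff_lat ab : fst (latp ab) ^ 2 - snd (latp ab) ^ 2 = IZR (Rv e1 k ab) / 4.
Proof.
  destruct ab as [a b]. unfold latp, Rv, tr, mul; cbn [fst snd].
  replace ((IZR b * thy) ^ 2) with (IZR b * IZR b * (thy * thy)) by ring. rewrite Hthy, Hthx.
  unfold DD. repeat rewrite ?minus_IZR, ?plus_IZR, ?mult_IZR. field.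
Qed.

Lemma latp_inj x y : latp x = latp y -> x = y.
Proof.
  destruct x as [a b], y as [a' b']. unfold latp; cbn [fst snd]. intros H; inversion H.
  assert (IZR b = IZR b') by (apply (Rmult_eq_reg_r thy); lra). apply eq_IZR in H0. subst b'.
  assert (IZR a = IZR a') by lra. apply eq_IZR in H0. subst; reflexivity.
Qed.

Lemma final_gen (m : R) (hm : 0 < m) (s : list (R * R)) (hs_nodup : NoDup s)
  (hs : forall x, In x s <-> (in_lattice d x /\ fst x ^ 2 + snd x ^ 2 = m))
  (hne : s <> nil) : ~ spherical_design_r 2 (sqrt m) s.
Proof.
  intros [Hsq [Hne2 [Hnd2 [_ Hc]]]]. specialize (Hc c0). rewrite avg_c0 in Hc.
  assert (Hx0 : exists x0, In x0 s) by (destruct s; [congruence|eexists; left; eauto]).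
  destruct Hx0 as [x0 Hx0]. apply hs in Hx0 as [[ab0 Hab0] Hn0]. rewrite Hlat in Hab0. subst x0.
  rewrite norm_lat in Hn0. set (M := nrm e1 k ab0) in *.
  assert (HM : (1 <= M)%Z) by (subst m; apply lt_IZR in hm; lia).
  assert (Hperm : Permutation s (map latp (Sh e1 k M))).
  { apply NoDup_Permutation; auto.
    - apply FinFun.Injective_map_NoDup; [intros x y; apply latp_inj| apply S_nodup].
    - intros x. rewrite hs, in_map_iff. split.
      + intros [[ab Hab] Hn]. rewrite Hlat in Hab. subst x. exists ab. split; auto.
        apply in_S; auto. rewrite norm_lat, <- Hn0 in Hn. apply eq_IZR in Hn. auto.
      + intros [ab [<- Hab]]. apply in_S in Hab; auto. split; [exists ab; symmetry; apply Hlat|].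
        rewrite norm_lat, Hab. auto. }
  rewrite map_map in Hc. cbn [fst snd] in Hc.
  rewrite (sum_list_perm _ _ (Permutation_map _ Hperm)), map_map in Hc.
  assert (Hsm : sqrt m * sqrt m = m) by (apply sqrt_sqrt; lra).
  assert (Hsm0 : 0 < sqrt m) by (apply sqrt_lt_R0; lra).
  rewrite (sum_list_ext _ (fun ab => / (4 * m) * IZR (Rv e1 k ab))) in Hc.
  2:{ intros ab. rewrite poly_c0. cbn [fst snd].
      replace ((fst (latp ab) / sqrt m) ^ 2 - (snd (latp ab) / sqrt m) ^ 2)
        with ((fst (latp ab) ^ 2 - snd (latp ab) ^ 2) / (sqrt m * sqrt m)) by (field; lra).
      rewrite diff_lat, Hsm. field. lra. }
  rewrite sum_list_scal, sum_list_IZR in Hc.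
  assert (Hlen : INR (length (map (fun p => (fst p / sqrt m, snd p / sqrt m)) s)) <> 0).
  { rewrite length_map. destruct s as [|y l]; [congruence|]. simpl length. rewrite S_INR. pose proof (pos_INR (length l)). lra. }
  assert (HF : IZR (Fm e1 k M) = 0).
  { unfold Fm in *. apply Rmult_eq_reg_l with (/ (4 * m)); [|apply Rinv_neq_0_compat; lra].
    rewrite Rmult_0_r. apply Rmult_eq_reg_r with (/ INR (length (map (fun p => (fst p / sqrt m, snd p / sqrt m)) s))).
    - rewrite Rmult_0_l. exact Hc.
    - apply Rinv_neq_0_compat. exact Hlen. }
  apply eq_IZR in HF. apply (Harith M HM); auto.
  intros E. assert (In ab0 (Sh e1 k M)) by (apply in_S; auto). rewrite E in H. exact H.
Qed.

End RealPart.

End FM.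
Import FM.

Module IM.
Local Open Scope Z_scope.

Lemma odd_prime_not2 l : prime l -> 3 <= l -> ~ (l | 2).
Proof. intros Hl H3 Hd. apply Z.divide_pos_le in Hd; lia. Qed.

Ltac evsimp H := repeat match type of H with context [Z.even (Zpos ?p)] =>
  let v := eval compute in (Z.even (Zpos p)) in change (Z.even (Zpos p)) with v in H end.

Lemma arith_theta k (Hk : 2 <= k) (Hl : prime (4 * k - 1)) (Hpar : k = 2 \/ Z.Odd k)
  (Hred : forall A B C, 1 <= A -> 3 * A * A <= DD 1 k -> -A <= B < A -> B * B + DD 1 k = 4 * A * C -> A = 1)
  (Hbase : Fm 1 k 1 <> 0) :
  forall m, 1 <= m -> Sh 1 k m <> nil -> Fm 1 k m <> 0.
Proof.
  assert (He1 : 1 = 0 \/ 1 = 1) by lia.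
  set (l := 4 * k - 1) in *.
  assert (HDD : DD 1 k = l) by (unfold DD, l; ring).
  assert (Hl2 : ~ (l | 2)) by (apply odd_prime_not2; auto; lia).
  apply (main_arith 1 k He1 Hk l (-1, 2)); auto.
  - unfold nrm, l; cbn [fst snd]; ring.
  - intros [a b] Hd. apply divb_coord; auto. { unfold nrm; cbn [fst snd]; lia. }
    replace (nrm 1 k (-1, 2)) with l by (unfold nrm, l; cbn [fst snd]; ring).
    pose proof (nrm4 1 k (a, b)) as H4. unfold tr in H4; cbn [fst snd] in H4. rewrite HDD in H4.
    destruct Hd as [n Hn]. rewrite Hn in H4.
    assert (HT : (l | (2 * a + b) * (2 * a + b))) by (exists (4 * n - b * b); lia).
    assert (HT2 : (l | 2 * a + b)) by (destruct (prime_mult l Hl _ _ HT); auto).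
    unfold mul, cnj; cbn [fst snd]. split.
    + assert (H2 : (l | 2 * (a * 1 - k * b * (-2)))).
      { destruct HT2 as [t Ht]. exists (t + b). unfold l in *. lia. }
      destruct (prime_mult l Hl _ _ H2); [contradiction|auto].
    + destruct HT2 as [t Ht]. exists (- t). lia.
  - intros [a b]. unfold Rv, tr, mul, l; cbn [fst snd]. ring.
  - apply tr_gen; auto. intros p u Hp Hpl Hu. rewrite HDD in Hu.
    assert (H4p : (l | 4 * p)) by (exists (u * u); lia).
    destruct (prime_mult l Hl _ _ H4p) as [H4|H4].
    + apply Hl2. destruct (prime_mult l Hl 2 2) as [X|X]; auto.
    + destruct (prime_divisors p Hp l H4) as [X|[X|[X|X]]]; pose proof (prime_ge_2 _ Hl); pose proof (prime_ge_2 _ Hp); lia.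
  - intros q g Hq Hql Hd Hn. destruct (Z.eq_dec q 2) as [->|Hq2].
    + destruct Hpar as [->|[k' ->]].
      * exists (0, 1). unfold nrm; cbn [fst snd]; ring.
      * exfalso. apply Hn. destruct g as [a b]; cbn [fst snd] in *. destruct Hd as [z Hz].
        unfold nrm in Hz; cbn [fst snd] in Hz.
        destruct (Z.Even_or_Odd a) as [[x Hx]|[x Hx]], (Z.Even_or_Odd b) as [[y Hy]|[y Hy]]; subst a b.
        -- split; [exists x | exists y]; lia.
        -- assert (z * 2 = 2 * (2 * x * x + 2 * x * y + x + 4 * k' * y * y + 4 * k' * y + k' + 2 * y * y + 2 * y) + 1) by (rewrite <- Hz; ring). lia.
        -- assert (z * 2 = 2 * (2 * x * x + 2 * x + 2 * x * y + y + 4 * k' * y * y + 2 * y * y) + 1) by (rewrite <- Hz; ring). lia.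
        -- assert (z * 2 = 2 * (2 * x * x + 3 * x + 2 * x * y + 3 * y + 1 + 4 * k' * y * y + 4 * k' * y + k' + 2 * y * y) + 1) by (rewrite <- Hz; ring). lia.
    + apply (cn_odd 1 k He1 Hk Hred q g); auto.
Qed.

Lemma arith_two : forall m, 1 <= m -> Sh 0 2 m <> nil -> Fm 0 2 m <> 0.
Proof.
  assert (He1 : 0 = 0 \/ 0 = 1) by lia. assert (Hk : 2 <= 2) by lia.
  assert (Hl : prime 2) by exact prime_2.
  apply (main_arith 0 2 He1 Hk 2 (0, 1)); auto.
  - intros [a b] Hd. apply divb_coord; auto. { unfold nrm; cbn [fst snd]; lia. }
    replace (nrm 0 2 (0, 1)) with 2 by reflexivity.
    destruct Hd as [n Hn]. unfold nrm in Hn; cbn [fst snd] in Hn.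
    assert (Ha : (2 | a * a)) by (exists (n - b * b); lia).
    assert (Ha2 : (2 | a)) by (destruct (prime_mult 2 Hl _ _ Ha); auto).
    unfold mul, cnj; cbn [fst snd]. destruct Ha2 as [t Ht]. split; [exists b | exists (- t)]; lia.
  - intros [a b]. unfold Rv, tr, mul; cbn [fst snd]. ring.
  - apply tr_gen; auto. intros p u Hp Hpl Hu. unfold DD in Hu.
    assert (Hp2 : (2 | p)) by (exists (u * u); lia).
    destruct (prime_divisors p Hp 2 Hp2) as [X|[X|[X|X]]]; pose proof (prime_ge_2 _ Hp); lia.
  - intros q g Hq Hql Hd Hn. apply (cn_odd 0 2 He1 Hk) with g; auto.
    intros A B C H1 H3 HB HE. unfold DD in *. assert (A <= 1) by (apply Z.nlt_ge; intro; nia). lia.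
  - vm_compute. discriminate.
Qed.

Lemma prime_check p : 1 < p -> forallb (fun i => Z.gcd (Z.of_nat i) p =? 1) (seq 1 (Z.to_nat p - 1)) = true -> prime p.
Proof.
  intros H1 Hc. apply prime_intro; auto. intros n Hn. apply Zgcd_1_rel_prime.
  rewrite forallb_forall in Hc. specialize (Hc (Z.to_nat n)).
  rewrite Z2Nat.id in Hc by lia. apply Z.eqb_eq, Hc, in_seq. lia.
Qed.

Ltac enum x lo hi :=
  first [ assert (x = hi) as -> by lia
        | let lo' := eval compute in (lo + 1) in
          assert (x = lo \/ lo' <= x <= hi) as [-> | ?] by lia; [ | enum x lo' hi ] ].

Ltac arith_inst bnd :=
  apply arith_theta;
  [ lia
  | apply prime_check; [lia | vm_compute; reflexivity]
  | first [ left; reflexivity | right; apply Z.odd_spec; reflexivity ]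
  | let A := fresh "A" in let B := fresh "B" in let C := fresh "C" in
    intros A B C H1 H3 HB HE; unfold DD in *;
    assert (A <= bnd) by (apply Z.nlt_ge; intro; nia);
    enum A 1 bnd; try reflexivity; exfalso; enum B (- bnd) (bnd - 1); lia
  | vm_compute; discriminate ].

Lemma arith7 : forall m, 1 <= m -> Sh 1 2 m <> nil -> Fm 1 2 m <> 0. Proof. arith_inst 1. Qed.
Lemma arith11 : forall m, 1 <= m -> Sh 1 3 m <> nil -> Fm 1 3 m <> 0. Proof. arith_inst 1. Qed.
Lemma arith19 : forall m, 1 <= m -> Sh 1 5 m <> nil -> Fm 1 5 m <> 0. Proof. arith_inst 2. Qed.
Lemma arith43 : forall m, 1 <= m -> Sh 1 11 m <> nil -> Fm 1 11 m <> 0. Proof. arith_inst 3. Qed.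
Lemma arith67 : forall m, 1 <= m -> Sh 1 17 m <> nil -> Fm 1 17 m <> 0. Proof. arith_inst 4. Qed.
Lemma arith163 : forall m, 1 <= m -> Sh 1 41 m <> nil -> Fm 1 41 m <> 0. Proof. arith_inst 7. Qed.

End IM.
Import IM.

Lemma theta_case (d k : Z) : (Z.modulo (- d) 4 =? 1)%Z = true -> (4 * k - 1 = d)%Z -> (2 <= k)%Z ->
  (forall m, (1 <= m)%Z -> Sh 1 k m <> nil -> Fm 1 k m <> 0%Z) ->
  forall m, 0 < m -> forall s : list (R * R), NoDup s ->
  (forall x, In x s <-> (in_lattice d x /\ fst x ^ 2 + snd x ^ 2 = m)) -> s <> nil ->
  ~ spherical_design_r 2 (sqrt m) s.
Proof.
  intros Hmod Hd Hk Har. assert (Hd0 : 0 < IZR d) by (apply IZR_lt; lia).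
  apply (final_gen 1 k d (1/2) (sqrt (IZR d) / 2)); auto.
  - unfold theta. rewrite Hmod. reflexivity.
  - replace (sqrt (IZR d) / 2 * (sqrt (IZR d) / 2)) with (sqrt (IZR d) * sqrt (IZR d) / 4) by field.
    rewrite sqrt_sqrt by lra. unfold DD. f_equal. f_equal. lia.
  - apply Rdiv_lt_0_compat; [apply sqrt_lt_R0; lra | lra].
Qed.

Theorem theorem1p3 (d : Z) (hd : In d (2 :: 7 :: 11 :: 19 :: 43 :: 67 :: 163 :: nil)%Z)
  (m : R) (hm : 0 < m) (s : list (R * R)) (hs_nodup : NoDup s)
  (hs : forall x, In x s <-> (in_lattice d x /\ fst x ^ 2 + snd x ^ 2 = m))
  (hne : s <> nil) :
  ~ spherical_design_r 2 (sqrt m) s.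
Proof.
  simpl in hd. destruct hd as [<-|[<-|[<-|[<-|[<-|[<-|[<-|[]]]]]]]].
  - apply (final_gen 0 2 2 0 (sqrt 2)); auto; try lia.
    + exact arith_two.
    + lra.
    + rewrite sqrt_sqrt by lra. unfold DD. simpl. lra.
    + apply sqrt_lt_R0; lra.
  - apply (theta_case 7 2); auto; try reflexivity; try lia. exact arith7.
  - apply (theta_case 11 3); auto; try reflexivity; try lia. exact arith11.
  - apply (theta_case 19 5); auto; try reflexivity; try lia. exact arith19.
  - apply (theta_case 43 11); auto; try reflexivity; try lia. exact arith43.
  - apply (theta_case 67 17); auto; try reflexivity; try lia. exact arith67.
  - apply (theta_case 163 41); auto; try reflexivity; try lia. exact arith163.
Qed.
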